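(* Let $d=d_\ell+d_s$ and write $w\in\mathbb{R}^d$ as $w=(u,s)$ with $u\in\mathbb{R}^{d_\ell}$, $s\in\mathbb{R}^{d_s}$. Let $\mathcal{W}\subset\mathbb{R}^d$ be a closed convex set with finite diameter $D:=\sup_{w,w'\in\mathcal{W}}\|w-w'\|_2<\infty$. Let $\lambda_p,\lambda_s\ge 0$, and for $t=1,\dots,T$ let $f_t:\mathbb{R}^d\to\mathbb{R}$ be convex and $c_t\in\mathbb{R}^{d_\ell}$, and define \[ F_t(w)=f_t(w)+\lambda_p\|s\|_1+\frac{\lambda_s}{2}\|u-c_t\|_2^2 . \] Let $\eta>0$, $w_0\in\mathcal{W}$, and for $t=1,\dots,T$ let \[ w_t\in\arg\min_{w\in\mathcal{W}}\Big\{F_t(w)+\frac{1}{2\eta}\|w-w_{t-1}\|_2^2\Big\}. \] Then for any comparator sequence $\{v_t\}_{t=1}^T\subset\mathcal{W}$, with path length $V_T(\{v_t\}):=\sum_{t=2}^T\|v_t-v_{t-1}\|_2$, \[ \sum_{t=1}^{T}\big(F_t(w_t)-F_t(v_t)\big)\;\le\;\frac{1}{2\eta}\|v_1-w_0\|_2^2+\frac{D}{\eta}\,V_T(\{v_t\}). \] In particular, if $w_t^\star\in\arg\min_{w\in\mathcal{W}}F_t(w)$ for each $t$ and $V_T^\star:=\sum_{t=2}^T\|w_t^\star-w_{t-1}^\star\|_2$, then \[ \sum_{t=1}^{T}\big(F_t(w_t)-F_t(w_t^\star)\big)\;\le\;\frac{1}{2\eta}\|w_1^\star-w_0\|_2^2+\frac{D}{\eta}\,V_T^\star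 . \]
   Context: $\|\cdot\|_2$ is the Euclidean norm and $\|\cdot\|_1$ the $\ell_1$ norm. (The comparator points are denoted $u_t$ in the paper; they are renamed $v_t$ here to avoid a clash with the block $u$ of $w$.) *)

(* Defs.v *)
From HB Require Import structures.
From mathcomp Require Import all_boot all_order all_algebra.
From mathcomp Require Import all_classical all_reals all_analysis.
Set Implicit Arguments. Unset Strict Implicit. Unset Printing Implicit Defensive.
Import Order.TTheory GRing.Theory Num.Theory.
Import numFieldNormedType.Exports.
Local Open Scope classical_set_scope.
Local Open Scope ring_scope.

Section Defs.
Variable R : realType.

Definition norm2 n (x : 'rV[R]_n) : R := Num.sqrt (\sum_(i < n) x 0 i ^+ 2).
Definition norm1 n (x : 'rV[R]_n) : R := \sum_(i < n) `|x 0 i|.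

Definition ublock dl ds (w : 'rV[R]_(dl + ds)) : 'rV[R]_dl := lsubmx w.
Definition sblock dl ds (w : 'rV[R]_(dl + ds)) : 'rV[R]_ds := rsubmx w.

Definition convex_fun n (f : 'rV[R]_n -> R) : Prop :=
  forall x y (a : R), 0 <= a <= 1 ->
    f (a *: x + (1 - a) *: y) <= a * f x + (1 - a) * f y.

Definition dists n (W : set 'rV[R]_n) : set R :=
  [set r | exists x y, W x /\ W y /\ r = norm2 (x - y)].
Definition diam n (W : set 'rV[R]_n) : R := sup (dists W).

Definition is_argmin n (W : set 'rV[R]_n) (G : 'rV[R]_n -> R) (w : 'rV[R]_n) : Prop :=
  W w /\ forall w', W w' -> G w <= G w'.

Definition Fobj dl ds (lp ls : R) (f : 'rV[R]_(dl + ds) -> R) (c : 'rV[R]_dl)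
  (w : 'rV[R]_(dl + ds)) : R :=
  f w + lp * norm1 (sblock w) + ls / 2 * norm2 (ublock w - c) ^+ 2.

Definition path_length n (T : nat) (v : nat -> 'rV[R]_n) : R :=
  \sum_(2 <= t < T.+1) norm2 (v t - v t.-1).

End Defs.

(* Main.v *)
Require Import Defs.
From HB Require Import structures.
From mathcomp Require Import all_boot all_order all_algebra.
From mathcomp Require Import all_classical all_reals all_analysis.
From mathcomp Require Import ring lra.
Import Order.TTheory GRing.Theory Num.Theory.
Import numFieldNormedType.Exports.
Local Open Scope classical_set_scope.
Local Open Scope ring_scope.

Lemma convW (R : realType) n (W : set 'rV[R]_n) x y (a : R) :
  convex_set W -> W x -> W y -> 0 <= a <= 1 -> W (a *: x + (1 - a) *: y).
Proof.
move=> cW Wx Wy /andP[a0 a1].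
have P : Itv.spec (@Itv.num_sem R) (Itv.Real `[0%Z, 1%Z]) a.
  by rewrite /= /Itv.num_sem /= in_itv /= a0 a1 ger0_real.
pose t : {i01 R} := Itv.mk P.
have := cW x y t.
rewrite !inE => /(_ Wx Wy).
done.
Qed.

Set Implicit Arguments. Unset Strict Implicit.
Section Aux.
Variable R : realType.

Definition sq n (x : 'rV[R]_n) : R := \sum_(i < n) x 0 i ^+ 2.
Definition ip n (x y : 'rV[R]_n) : R := \sum_(i < n) x 0 i * y 0 i.

Lemma sq_ge0 n (x : 'rV[R]_n) : 0 <= sq x.
Proof. by apply: sumr_ge0 => i _; rewrite sqr_ge0. Qed.

Lemma norm2_sq n (x : 'rV[R]_n) : norm2 x ^+ 2 = sq x.
Proof. by rewrite /norm2 sqr_sqrtr // sq_ge0. Qed.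

Lemma norm2_ge0 n (x : 'rV[R]_n) : 0 <= norm2 x.
Proof. exact: sqrtr_ge0. Qed.

Lemma sq_quad n (x z : 'rV[R]_n) t :
  sq (x - t *: z) = sq x - 2 * t * ip x z + t ^+ 2 * sq z.
Proof.
rewrite /sq /ip mulr_sumr mulr_sumr -sumrB -big_split /=.
by apply: eq_bigr => i _; rewrite !mxE; ring.
Qed.

Lemma CS2 n (x z : 'rV[R]_n) : ip x z ^+ 2 <= sq x * sq z.
Proof.
have H t : 0 <= sq x - 2 * t * ip x z + t ^+ 2 * sq z by rewrite -sq_quad sq_ge0.
have [B0|Bpos] := eqVneq (sq z) 0.
  have [C0|Cn0] := eqVneq (ip x z) 0; first by rewrite C0 B0; lra.
  have := H ((sq x + 1) / (2 * ip x z)).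
  rewrite B0 mulr0 addr0.
  have -> : 2 * ((sq x + 1) / (2 * ip x z)) * ip x z = sq x + 1.
    by field; rewrite Cn0.
  lra.
have Bp : 0 < sq z by rewrite lt_def Bpos sq_ge0.
have := H (ip x z / sq z).
have -> : sq x - 2 * (ip x z / sq z) * ip x z + (ip x z / sq z) ^+ 2 * sq z
   = (sq x * sq z - ip x z ^+ 2) / sq z by field.
rewrite pmulr_lge0 ?invr_gt0 //; lra.
Qed.

Lemma CS n (x z : 'rV[R]_n) : ip x z <= norm2 x * norm2 z.
Proof.
rewrite /norm2 -sqrtrM ?sq_ge0 //.
apply: (le_trans (ler_norm _)).
rewrite -sqrtr_sqr ler_sqrt ?CS2 //.
by rewrite mulr_ge0 ?sq_ge0.
Qed.

Lemma sq_diff_bound n (x y : 'rV[R]_n) D :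
  norm2 x <= D -> norm2 y <= D ->
  sq x - sq y <= 2 * D * norm2 (x - y).
Proof.
move=> hx hy.
have E : sq x - sq y = ip x (x - y) + ip y (x - y).
  rewrite /sq /ip -sumrB -big_split /=.
  by apply: eq_bigr => i _; rewrite !mxE; ring.
rewrite E.
have := CS x (x - y); have := CS y (x - y).
have := norm2_ge0 (x - y); have := norm2_ge0 x; have := norm2_ge0 y.
nra.
Qed.


Lemma sq_comb n (x y p : 'rV[R]_n) a :
  sq (a *: x + (1 - a) *: y - p) =
  a * sq (x - p) + (1 - a) * sq (y - p) - a * (1 - a) * sq (x - y).
Proof.
rewrite /sq !mulr_sumr -!big_split -sumrB /=.
by apply: eq_bigr => i _; rewrite !mxE; ring.
Qed.

Lemma Fobj_convex dl ds lp ls (f : 'rV[R]_(dl + ds) -> R) c :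
  0 <= lp -> 0 <= ls -> convex_fun f -> convex_fun (Fobj lp ls f c).
Proof.
move=> lp0 ls0 cf x y a /andP[a0 a1].
have h1 := cf x y a (introT andP (conj a0 a1)).
rewrite /Fobj.
have h2 : norm1 (sblock (a *: x + (1 - a) *: y)) <=
          a * norm1 (sblock x) + (1 - a) * norm1 (sblock y).
  rewrite /norm1 !mulr_sumr -big_split /=.
  apply: ler_sum => i _; rewrite !mxE.
  apply: (le_trans (ler_normD _ _)).
  rewrite !normrM (ger0_norm a0) (ger0_norm (_ : 0 <= 1 - a)) //; lra.
have h3 : norm2 (ublock (a *: x + (1 - a) *: y) - c) ^+ 2 <=
          a * norm2 (ublock x - c) ^+ 2 + (1 - a) * norm2 (ublock y - c) ^+ 2.
  rewrite !norm2_sq.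
  have -> : ublock (a *: x + (1 - a) *: y) = a *: ublock x + (1 - a) *: ublock y.
    by apply/matrixP => i j; rewrite !mxE.
  rewrite sq_comb.
  have := sq_ge0 (ublock x - ublock y).
  have : 0 <= a * (1 - a) by apply: mulr_ge0; lra.
  nra.
have := mulr_ge0 lp0 a0; have : 0 <= lp * (1 - a) by apply: mulr_ge0; lra.
have : 0 <= ls / 2 by apply: divr_ge0.
nra.
Qed.

Lemma lim0 (X K : R) : 0 <= K -> (forall a, 0 < a <= 1 -> X <= a * K) -> X <= 0.
Proof.
move=> K0 H; rewrite leNgt; apply/negP => Xp.
have [Kz|Kp] := eqVneq K 0.
  by have := H 1; rewrite Kz mulr0 lexx ltr01 => /(_ isT); lra.
have Kp' : 0 < K by rewrite lt_def Kp K0.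
pose a := Num.min 1 (X / (2 * K)).
have a1 : a <= 1 by rewrite ge_min lexx.
have apos : 0 < a by rewrite lt_min ltr01 divr_gt0 // mulr_gt0.
have aK : a * K <= X / 2.
  have : a <= X / (2 * K) by rewrite ge_min lexx orbT.
  move=> h; have := ler_pM2r Kp'; move=> e.
  have : a * K <= X / (2 * K) * K by rewrite ler_pM2r.
  have -> : X / (2 * K) * K = X / 2 by field.
  done.
have := H a; rewrite apos a1 => /(_ isT); lra.
Qed.

Lemma three_point n (W : set 'rV[R]_n) (F : 'rV[R]_n -> R) q p w v :
  convex_set W -> convex_fun F -> 0 < q -> W v ->
  is_argmin W (fun x => F x + q * norm2 (x - p) ^+ 2) w ->
  F w - F v <= q * sq (v - p) - q * sq (v - w).
Proof.
move=> cW cF q0 Wv [Ww Hmin].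
suff: F w + q * sq (w - p) + q * sq (v - w) - F v - q * sq (v - p) <= 0.
  have := sq_ge0 (w - p); nra.
apply: (@lim0 _ (q * sq (v - w))); first by rewrite mulr_ge0 ?sq_ge0 // ltW.
move=> a /andP[a0 a1].
have Wa := @convW R n W v w a cW Wv Ww (introT andP (conj (ltW a0) a1)).
have := Hmin _ Wa; rewrite !norm2_sq sq_comb.
have := cF v w a (introT andP (conj (ltW a0) a1)).
move=> hc hm.
have : a * (F w + q * sq (w - p) + q * sq (v - w) - F v - q * sq (v - p)
        - a * (q * sq (v - w))) <= 0.
  nra.
move=> h; have := a0; nra.
Qed.

End Aux.
Unset Implicit Arguments.

Theorem theoremC2 (R : realType) (dl ds : nat) (W : set 'rV[R]_(dl + ds))
  (lp ls eta : R) (T : nat)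
  (f : nat -> 'rV[R]_(dl + ds) -> R) (c : nat -> 'rV[R]_dl)
  (w : nat -> 'rV[R]_(dl + ds)) :
  closed W -> convex_set W -> has_ubound (dists W) ->
  0 <= lp -> 0 <= ls ->
  (forall t, (1 <= t <= T)%N -> convex_fun (f t)) ->
  0 < eta -> W (w 0%N) ->
  (forall t, (1 <= t <= T)%N ->
     is_argmin W (fun x => Fobj lp ls (f t) (c t) x
                           + 1 / (2 * eta) * norm2 (x - w t.-1) ^+ 2) (w t)) ->
  (forall v : nat -> 'rV[R]_(dl + ds),
     (forall t, (1 <= t <= T)%N -> W (v t)) ->
     \sum_(1 <= t < T.+1) (Fobj lp ls (f t) (c t) (w t) - Fobj lp ls (f t) (c t) (v t))
     <= 1 / (2 * eta) * norm2 (v 1%N - w 0%N) ^+ 2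
        + diam W / eta * path_length T v)
  /\
  (forall wstar : nat -> 'rV[R]_(dl + ds),
     (forall t, (1 <= t <= T)%N -> is_argmin W (Fobj lp ls (f t) (c t)) (wstar t)) ->
     \sum_(1 <= t < T.+1) (Fobj lp ls (f t) (c t) (w t) - Fobj lp ls (f t) (c t) (wstar t))
     <= 1 / (2 * eta) * norm2 (wstar 1%N - w 0%N) ^+ 2
        + diam W / eta * path_length T wstar).
Proof.
move=> _ cW ubW lp0 ls0 cf eta0 W0 Hw.
set q := 1 / (2 * eta).
have q0 : 0 < q by rewrite /q divr_gt0 // mulr_gt0.
set D := diam W.
have hD : forall x y, W x -> W y -> norm2 (x - y) <= D.
  move=> x y Wx Wy; apply: sup_upper_bound.
    split => //; exists 0, (w 0%N), (w 0%N); split => //; split => //.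
    by rewrite subrr /norm2 big1 ?sqrtr0 // => i _; rewrite mxE expr0n.
  by exists x, y.
have P1 : forall v : nat -> 'rV[R]_(dl + ds),
     (forall t, (1 <= t <= T)%N -> W (v t)) ->
     \sum_(1 <= t < T.+1) (Fobj lp ls (f t) (c t) (w t) - Fobj lp ls (f t) (c t) (v t))
     <= q * norm2 (v 1%N - w 0%N) ^+ 2 + D / eta * path_length T v.
  move=> v Hv.
  have step : forall t, (1 <= t <= T)%N ->
      Fobj lp ls (f t) (c t) (w t) - Fobj lp ls (f t) (c t) (v t)
      <= q * sq (v t - w t.-1) - q * sq (v t - w t).
    move=> t ht; apply: (three_point (W := W) (F := Fobj lp ls (f t) (c t))) => //.
    - exact: Fobj_convex (cf t ht).
    - exact: Hv.
    - exact: Hw.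
  have claim : forall m, (1 <= m <= T)%N ->
      \sum_(1 <= t < m.+1) (Fobj lp ls (f t) (c t) (w t) - Fobj lp ls (f t) (c t) (v t))
      <= q * sq (v 1%N - w 0%N) - q * sq (v m - w m) + D / eta * path_length m v.
    elim=> [//|m IH] /andP[_ hm].
    case: m IH hm => [|m'] IH hm.
      rewrite big_nat1 /path_length big_geq // mulr0 addr0.
      by apply: (step 1%N); rewrite /= hm.
    set m := m'.+1.
    have m1 : (1 <= m)%N by [].
    have hm' : (1 <= m.+1 <= T)%N by rewrite /= hm.
    have hm0 : (1 <= m <= T)%N by rewrite m1 ltnW.
    have h1 := IH hm0.
    have h2 := step m.+1 hm'.
    have hb := sq_diff_bound (hD _ _ (Hv _ hm') (Hw _ hm0).1) (hD _ _ (Hv _ hm0) (Hw _ hm0).1).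
    rewrite (_ : v m.+1 - w m - (v m - w m) = v m.+1 - v m) in hb; last first.
      by rewrite opprB addrA subrK.
    have e1 : path_length m.+1 v = path_length m v + norm2 (v m.+1 - v m).
      by rewrite /path_length big_nat_recr.
    rewrite e1 (big_nat_recr m.+1) //=.
    have hb' : q * (sq (v m.+1 - w m) - sq (v m - w m)) <= q * (2 * D * norm2 (v m.+1 - v m)).
      by rewrite ler_pM2l.
    rewrite (_ : q * (2 * D * norm2 (v m.+1 - v m)) = D / eta * norm2 (v m.+1 - v m)) in hb'; last first.
      by rewrite /q; field; rewrite gt_eqF.
    rewrite mulrBr in hb'.
    rewrite /= in h1 h2 hb'.
    rewrite mulrDr.
    lra.
  case: T Hw Hv claim cf {step} => [|n] _ _ claim _.
    rewrite big_geq // /path_length big_geq // mulr0 addr0.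
    by apply: mulr_ge0; [exact: ltW | rewrite norm2_sq sq_ge0].
  apply: (le_trans (claim n.+1 _)); first by rewrite leqnn.
  rewrite norm2_sq.
  have := sq_ge0 (v n.+1 - w n.+1); have := q0; nra.
split; first exact: P1.
move=> ws Hs; apply: P1 => t ht; exact: (Hs t ht).1.
Qed.
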